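(* Let $T$ be a reducing triangulation (possibly infinite, e.g. lifted to a covering space) of an oriented surface without boundary. Let $C$ and $C'$ be two disjoint simple closed walks in $T$ that together bound an annulus. Then $C$ and $C'$ are not both reduced closed walks.
   Context: A triangulation is an embedded graph whose faces are all open disks bounded by three edge-sides. A reducing triangulation $T$ of an oriented surface without boundary is a triangulation in which every vertex has degree at least $8$ and each triangle is colored red or blue so that adjacent triangles have different colors. It may be infinite, for instance when lifted to a covering space together with its colors. Suppose a walk traverses a directed edge $e$ into a vertex $v$ and then leaves $v$ along a directed edge $e'$. This occurrence of $v$ makes a $k$-turn ($k\ge 0$) if exactly $k$ triangles around $v$ lie to the left of the length-two walk $e\,e'$, between $e$ and $e'$ in the cyclic order around $v$. It makes a $-k$-turn ($k\ge 1$) if exactly $k$ triangles lie to its right. A turn is named by an integer in $\{-3,\dots,3\}$ when possible, which is unambiguous since degrees are at least $8$; otherwise it is named by the positive integer. A $k_b$-turn (resp. $k_r$-turn) is a $k$-turn in which the triangle to the left of $e$ is blue (resp. red). A bad turn is a $0$-turn, a $1$-turn, a $-1$-turn, a $2_r$-turn or a $-2_r$-turn. A closed walk, whose vertices are cyclically ordered and all interior, is a reduced closed walk if none of its vertices makes a bad turn, not all of its vertices make $3_r$-turns, and not all of its vertices make $-3_b$-turns. Reversing a closed walk preserves reducedness. *)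

(* Defs.v *)
From mathcomp Require Import all_boot.
From Stdlib Require List.
Set Implicit Arguments. Unset Strict Implicit. Unset Printing Implicit Defensive.

(* A (possibly infinite) triangulation of an oriented surface without
   boundary, as an oriented combinatorial map:
   - darts = directed edges (edge-sides);
   - alpha = reversal of a dart (fixed-point-free involution);
   - sigma = counterclockwise rotation of the darts leaving a vertex
     (a permutation with inverse sigmai, finite orbits = vertices);
   - faces = orbits of phi := sigmai \o alpha; phi x runs along the boundary
     of the face lying to the LEFT of x; every face is a triangle
     (phi has order exactly 3 on every dart). *)
Record tmap := TMap {
  dart :> Type;
  alpha : dart -> dart;
  sigma : dart -> dart;
  sigmai : dart -> dart;
  alphaK : forall x, alpha (alpha x) = x;
  alpha_nofix : forall x, alpha x <> x;
  sigmaK : forall x, sigmai (sigma x) = x;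
  sigmaiK : forall x, sigma (sigmai x) = x;
  sigma_finite : forall x, exists2 k, 0 < k & iter k sigma x = x;
  face_tri : forall x, iter 3 (fun y => sigmai (alpha y)) x = x;
  face_nofix : forall x, sigmai (alpha x) <> x
}.
Arguments alpha {t}. Arguments sigma {t}. Arguments sigmai {t}.

Section Defs.
Variable T : tmap.
Implicit Types (x y e f : T) (w : nat -> T).

Definition phi x : T := sigmai (alpha x).

Definition same_vertex x y := exists k, iter k sigma x = y.
Definition same_face x y := exists k, iter k phi x = y.
Definition same_edge x y := y = x \/ y = alpha x.

(* Reducing triangulation; [red x = true] means the triangle to the left of
   x (its face) is red, [false] means blue. *)
Definition reducing (red : T -> bool) : Prop :=
  [/\ (forall x k, 0 < k < 8 -> iter k sigma x <> x),
      (forall x, red (phi x) = red x)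
    & (forall x, red (alpha x) <> red x)].

(* Turns at the vertex v reached by the incoming dart e and left by the
   outgoing dart e'.  Triangles around v between e and e' on the left of the
   walk e e' are the corners met when rotating clockwise (sigmai) from
   alpha e to e'. *)
Definition lturn (k : nat) e e' :=
  iter k sigmai (alpha e) = e' /\ forall j, j < k -> iter j sigmai (alpha e) <> e'.
Definition rturn (k : nat) e e' :=
  0 < k /\ iter k sigma (alpha e) = e' /\
  forall j, j < k -> iter j sigma (alpha e) <> e'.

(* the triangle to the left of the incoming dart e is the face of e *)
Definition bad_turn (red : T -> bool) e e' :=
  lturn 0 e e' \/ lturn 1 e e' \/ rturn 1 e e' \/
  (lturn 2 e e' /\ red e) \/ (rturn 2 e e' /\ red e).
Definition turn_3r (red : T -> bool) e e' := lturn 3 e e' /\ red e.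
Definition turn_m3b (red : T -> bool) e e' := rturn 3 e e' /\ ~~ red e.

(* A closed walk of length n > 0: an n-periodic sequence of darts, the head
   of w i being the tail of w i.+1.  The i-th vertex occurrence is between
   w i and w i.+1. *)
Definition closed_walk (n : nat) w :=
  [/\ 0 < n, (forall i, w (i + n) = w i)
    & forall i, same_vertex (alpha (w i)) (w i.+1)].

Definition simple_walk (n : nat) w :=
  forall i j, i < j < n -> ~ same_vertex (w i) (w j).

Definition disjoint_walks (n : nat) w (n' : nat) w' :=
  forall i j, ~ same_vertex (w i) (w' j).

Definition reduced_walk (red : T -> bool) (n : nat) w :=
  [/\ closed_walk n w,
      (forall i, i < n -> ~ bad_turn red (w i) (w i.+1)),
      ~ (forall i, i < n -> turn_3r red (w i) (w i.+1))
    & ~ (forall i, i < n -> turn_m3b red (w i) (w i.+1))].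

Definition on_walk (n : nat) w x :=
  exists2 i, i < n & (x = w i \/ x = alpha (w i)).

Definition finite_pred (P : T -> Prop) :=
  exists l : seq T, forall x, P x -> List.In x l.

Fixpoint Rdistinct (R : T -> T -> Prop) (l : seq T) : Prop :=
  if l is x :: l' then (forall y, List.In y l' -> ~ R x y) /\ Rdistinct R l'
  else True.

Definition nclasses (P : T -> Prop) (R : T -> T -> Prop) (k : nat) :=
  exists l : seq T, [/\ size l = k, (forall y, List.In y l -> P y),
    (forall x, P x -> exists2 y, List.In y l & R y x) & Rdistinct R l].

(* connectivity of the closed subcomplex formed by the faces in inF
   (two closed triangles are adjacent when they share a vertex) *)
Inductive conn (P : T -> Prop) (x : T) : T -> Prop :=
  | conn_refl : conn P x x
  | conn_step y z : conn P x y -> P z ->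
      same_vertex y z \/ same_face y z -> conn P x z.

(* C = (n,w) and C' = (n',w') together bound an annulus: there is a finite
   set of triangles (given by the darts of their boundaries, inF) whose
   union K satisfies
   - the boundary edges of K (edges with exactly one side in K) are exactly
     the edges of C and C'  (this makes K a compact surface with boundary
     C u C', the vertex links being arcs or circles automatically),
   - K is connected,
   - chi(K) = V - E + F = 0,
   so K is a connected compact orientable surface with two boundary circles
   and Euler characteristic 0, i.e. an annulus. *)
Definition bound_annulus (n : nat) w (n' : nat) w' :=
  exists inF : T -> Prop,
  [/\ (forall x, inF (phi x) <-> inF x),
      finite_pred inF,
      (forall x, (inF x /\ ~ inF (alpha x)) \/ (~ inF x /\ inF (alpha x)) <->
                 on_walk n w x \/ on_walk n' w' x),
      (forall x y, inF x -> inF y -> conn inF x y)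
    & exists V E F,
        [/\ nclasses inF same_vertex V,
            nclasses (fun x => inF x \/ inF (alpha x)) same_edge E,
            nclasses inF same_face F
          & V + F = E]].

End Defs.

(* Main.v *)
Require Import Defs.
From mathcomp Require Import all_boot.
From Stdlib Require Import Classical ClassicalEpsilon.
From Stdlib Require List.
From mathcomp Require Import zify.
Set Implicit Arguments. Unset Strict Implicit. Unset Printing Implicit Defensive.

Definition pb (P : Prop) : bool :=
  if excluded_middle_informative P then true else false.
Lemma pbP (P : Prop) : reflect P (pb P).
Proof. rewrite /pb; case: excluded_middle_informative => h; by constructor. Qed.
Definition ind (P : Prop) : nat := pb P.
Lemma ind_T (P : Prop) : P -> ind P = 1.
Proof. by rewrite /ind; case: pbP. Qed.
Lemma ind_F (P : Prop) : ~ P -> ind P = 0.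
Proof. by rewrite /ind; case: pbP. Qed.
Lemma ind_le1 P : ind P <= 1.
Proof. by rewrite /ind; case: pbP. Qed.
Lemma ind_pos P : 0 < ind P -> P.
Proof. by rewrite /ind; case: pbP. Qed.

Lemma exists_min (P : nat -> Prop) : (exists k, P k) ->
  exists k, P k /\ forall j, j < k -> ~ P j.
Proof.
move=> ex.
have ex' : exists k, pb (P k) by case: ex => k hk; exists k; apply/pbP.
case: (ex_minnP ex') => k /pbP Pk hmin; exists k; split => // j jk /pbP Pj.
by have := hmin j Pj; rewrite leqNgt jk.
Qed.

Section Basic.
Variable T : tmap.
Implicit Types x y z : T.

Lemma sigmaK' x : sigma (sigmai x) = x. Proof. exact: sigmaiK. Qed.
Lemma iter_sK k x : iter k sigmai (iter k sigma x) = x.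
Proof.
elim: k x => // k IH x; rewrite iterSr iterS.
by rewrite sigmaK IH.
Qed.
Lemma iter_siK k x : iter k sigma (iter k sigmai x) = x.
Proof.
elim: k x => // k IH x; rewrite iterSr iterS.
by rewrite sigmaiK IH.
Qed.
Lemma iter_s_inj k x y : iter k sigma x = iter k sigma y -> x = y.
Proof. by move=> h; rewrite -(iter_sK k x) h iter_sK. Qed.
Lemma iter_si_eq k x y : iter k sigmai x = y <-> iter k sigma y = x.
Proof. split=> <-; [exact: iter_siK | exact: iter_sK]. Qed.

Lemma sv_refl x : same_vertex x x. Proof. by exists 0. Qed.
Lemma sv_trans x y z : same_vertex x y -> same_vertex y z -> same_vertex x z.
Proof. by case=> a <- [b <-]; exists (b + a); rewrite iterD. Qed.
Lemma iter_period (f : T -> T) k x : iter k f x = x -> forall m, iter (m * k) f x = x.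
Proof. move=> h; elim=> // m IH; by rewrite mulSn iterD IH h. Qed.
Lemma sv_sym x y : same_vertex x y -> same_vertex y x.
Proof.
case=> j <-; case: (sigma_finite x) => p p0 hp.
exists (j * p - j).
rewrite -iterD subnK; first by rewrite iter_period.
by rewrite leq_pmulr.
Qed.
Lemma sv_iter k x : same_vertex x (iter k sigma x). Proof. by exists k. Qed.

Lemma phiE x : phi x = sigmai (alpha x). Proof. by []. Qed.
Lemma phi3 x : phi (phi (phi x)) = x. Proof. exact: (face_tri x). Qed.
Lemma phi_inj x y : phi x = phi y -> x = y.
Proof.
rewrite !phiE => h.
by rewrite -(alphaK x) -(sigmaiK (alpha x)) h sigmaiK alphaK.
Qed.
Lemma phi_alpha x : phi (alpha x) = sigmai x.
Proof. by rewrite phiE alphaK. Qed.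
Lemma sigma_phi x : sigma (phi x) = alpha x.
Proof. by rewrite phiE sigmaiK. Qed.
Lemma phi_asigma x : phi (alpha (sigma x)) = x.
Proof. by rewrite phi_alpha sigmaK. Qed.

Lemma sf_sym x y : same_face x y -> same_face y x.
Proof.
case=> j <-; exists (j * 3 - j).
rewrite -iterD subnK; first by rewrite iter_period //; exact: phi3.
by rewrite leq_pmulr.
Qed.
Lemma sf_trans x y z : same_face x y -> same_face y z -> same_face x z.
Proof. by case=> a <- [b <-]; exists (b + a); rewrite iterD. Qed.
Lemma sf_cases x y : same_face x y -> [\/ y = x, y = phi x | y = phi (phi x)].
Proof.
case=> k <-; rewrite (divn_eq k 3) iterD iter_period. all: try (by exact: phi3).
have : k %% 3 < 3 by rewrite ltn_mod.
by case: (k %% 3) => [|[|[|]]] //= _; [constructor 1|constructor 2|constructor 3].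
Qed.
Lemma sf_phi x : same_face x (phi x). Proof. by exists 1. Qed.
Lemma sf_phi2 x : same_face x (phi (phi x)). Proof. by exists 2. Qed.

Variable red : T -> bool.
Hypothesis Hred : reducing red.

Lemma red_alpha x : red (alpha x) = ~~ red x.
Proof. case: Hred => _ _ h; by move: (h x); case: (red x); case: (red (alpha x)). Qed.
Lemma red_phi x : red (phi x) = red x.
Proof. by case: Hred. Qed.
Lemma red_sigma x : red (sigma x) = ~~ red x.
Proof. by rewrite -{2}(phi_asigma x) red_phi red_alpha negbK. Qed.
Lemma red_sigmai x : red (sigmai x) = ~~ red x.
Proof. by rewrite -{2}(sigmaiK x) red_sigma negbK. Qed.
Lemma red_iter_phi k x : red (iter k (@phi T) x) = red x.
Proof. by elim: k => //= k IH; rewrite red_phi. Qed.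
Lemma red_sf x y : same_face x y -> red y = red x.
Proof. by case=> k <-; exact: red_iter_phi. Qed.
Lemma red_iter_sigma k x : red (iter k sigma x) = odd k (+) red x.
Proof. elim: k => //= k IH; by rewrite red_sigma IH; case: (odd k); case: (red x). Qed.

Lemma deg8 x j k : j < k < 8 -> iter j sigma x <> iter k sigma x.
Proof.
case/andP=> jk k8 h; case: Hred => hd _ _.
apply: (hd x (k - j)); first by apply/andP; split; [rewrite subn_gt0|lia].
apply: (@iter_s_inj j); by rewrite -iterD subnKC ?(ltnW jk).
Qed.

Variable inF : T -> Prop.
Hypothesis HinF : forall x, inF (phi x) <-> inF x.

Lemma inF_alpha x : inF (alpha x) <-> inF (sigmai x).
Proof. by rewrite -phi_alpha HinF. Qed.
Lemma inF_sf x y : same_face x y -> (inF y <-> inF x).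
Proof. case=> k <-; elim: k => //= k IH; by rewrite HinF. Qed.

End Basic.

Lemma ind_iff (P Q : Prop) : (P <-> Q) -> ind P = ind Q.
Proof. by move=> h; rewrite /ind; case: pbP; case: pbP; tauto. Qed.

Section Count.
Variable T : tmap.
Notation NoDupT := (Rdistinct (fun x y : T => x = y)).

Lemma sum_in_eq (L : seq T) (f g : T -> nat) :
  (forall y, List.In y L -> f y = g y) -> \sum_(y <- L) f y = \sum_(y <- L) g y.
Proof.
elim: L => [|a L IH] h; first by rewrite !big_nil.
rewrite !big_cons h /=; last by left.
by rewrite IH // => y hy; apply: h; right.
Qed.

Lemma sum_in_le (L : seq T) (f g : T -> nat) :
  (forall y, List.In y L -> f y <= g y) -> \sum_(y <- L) f y <= \sum_(y <- L) g y.
Proof.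
elim: L => [|a L IH] h; first by rewrite !big_nil.
rewrite !big_cons leq_add //; first by apply: h; left.
by apply: IH => y hy; apply: h; right.
Qed.

Lemma sum1_size (L : seq T) : \sum_(y <- L) 1 = size L.
Proof. elim: L => [|a L IH]; by rewrite ?big_nil ?big_cons ?IH. Qed.

Lemma sum_const (L : seq T) c : \sum_(y <- L) c = c * size L.
Proof. elim: L => [|a L IH]; rewrite ?big_nil ?big_cons ?IH ?muln0 //=. by rewrite mulnS. Qed.

Lemma sum_mulc (L : seq T) c (f : T -> nat) :
  \sum_(y <- L) (c * f y) = c * \sum_(y <- L) f y.
Proof. elim: L => [|a L IH]; rewrite ?big_nil ?big_cons ?IH ?muln0 //. by rewrite mulnDr. Qed.

Lemma sum_le1 (L : seq T) (f : T -> nat) :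
  (forall y, f y <= 1) -> \sum_(y <- L) f y <= size L.
Proof. move=> h; rewrite -sum1_size; exact: sum_in_le. Qed.

Lemma sum_eq_ge (L : seq T) (f g : T -> nat) :
  (forall y, List.In y L -> g y <= f y) -> \sum_(y <- L) f y = \sum_(y <- L) g y ->
  forall y, List.In y L -> f y = g y.
Proof.
elim: L => [|a L IH] h //=.
rewrite !big_cons => e.
have ha : g a <= f a by apply: h; left.
have hL : \sum_(y <- L) g y <= \sum_(y <- L) f y.
  by apply: sum_in_le => y hy; apply: h; right.
move=> y [<-|hy]; first by lia.
apply: IH => //; [by move=> z hz; apply: h; right | lia].
Qed.

Lemma sum_one (R : T -> T -> Prop) (L : seq T) (Q : T -> Prop) :
  Rdistinct R L -> (forall y y', Q y -> Q y' -> R y y') ->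
  \sum_(y <- L) ind (Q y) = ind (exists2 y, List.In y L & Q y).
Proof.
elim: L => [_ _|a L IH [hd hr] hu].
  by rewrite big_nil ind_F //; case.
rewrite big_cons IH //; case: (classic (Q a)) => qa.
  have nL : ~ exists2 y, List.In y L & Q y.
    by case=> y yL qy; apply: (hd y yL); apply: hu.
  rewrite (ind_F nL) (ind_T qa) (@ind_T (exists2 y, List.In y (a :: L) & Q y)) //.
  by exists a => //; left.
rewrite (ind_F qa) add0n; apply: ind_iff; split.
  by case=> y yL qy; exists y => //; right.
by case=> y [<-|yL] qy //; exists y.
Qed.

Lemma class_sum (U L : seq T) (P Pw : T -> Prop) (R : T -> T -> Prop) :
  Rdistinct R L -> (forall x, P x -> exists2 y, List.In y L & R y x) ->
  (forall y y' x, R y x -> R y' x -> R y y') -> (forall x, Pw x -> P x) ->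
  \sum_(x <- U) ind (Pw x) = \sum_(y <- L) \sum_(x <- U) ind (Pw x /\ R y x).
Proof.
move=> hd hc he hw; rewrite exchange_big /=; apply: eq_bigr => x _.
rewrite (@sum_one R L (fun y => Pw x /\ R y x)) //; last first.
  by move=> y y' [_ h1] [_ h2]; exact: he h1 h2.
apply: ind_iff; split; last by case=> y _ [].
by move=> pw; case: (hc x (hw x pw)) => y yL r; exists y.
Qed.

Lemma count_le (U L : seq T) (Q : T -> Prop) :
  NoDupT U -> NoDupT L -> (forall x, Q x -> List.In x L) ->
  \sum_(x <- U) ind (Q x) <= size L.
Proof.
move=> hU hL hQ.
apply: (@leq_trans (\sum_(x <- U) \sum_(l <- L) ind (x = l))).
  apply: leq_sum => x _.
  rewrite (@sum_one (fun x y => x = y) L (fun l => x = l)) //; last by move=> ? ? <- <-.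
  case: (classic (Q x)) => qx; last by rewrite (ind_F qx).
  by rewrite (ind_T qx) (@ind_T (exists2 l, List.In l L & x = l)) //; exists x => //; apply: hQ.
rewrite exchange_big /=; apply: sum_le1 => l.
rewrite (@sum_one (fun x y => x = y) U (fun x => x = l)) //; last by move=> ? ? -> ->.
exact: ind_le1.
Qed.

Lemma count_ge (U L : seq T) (Q : T -> Prop) :
  NoDupT U -> NoDupT L -> (forall l, List.In l L -> Q l /\ List.In l U) ->
  size L <= \sum_(x <- U) ind (Q x).
Proof.
move=> hU hL hQ.
rewrite -sum1_size.
rewrite (@sum_in_eq L (fun _ => 1) (fun l => \sum_(x <- U) ind (x = l))); last first.
  move=> l lL; rewrite (@sum_one (fun x y => x = y) U (fun x => x = l)) //; last by move=> ? ? -> ->.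
  by rewrite (@ind_T (exists2 x, List.In x U & x = l)) //; exists l => //; case: (hQ l lL).
rewrite exchange_big /=; apply: leq_sum => x _.
rewrite (@sum_one (fun x y => x = y) L (fun l => x = l)) //; last by move=> ? ? <- <-.
case: (classic (exists2 y, List.In y L & x = y)) => h; last by rewrite (ind_F h).
rewrite (ind_T h); case: h => y yL ->; rewrite (@ind_T (Q y)) //; by case: (hQ y yL).
Qed.

Lemma count_list (U L : seq T) (Q : T -> Prop) :
  NoDupT U -> NoDupT L -> (forall x, Q x <-> List.In x L) -> (forall l, List.In l L -> List.In l U) ->
  \sum_(x <- U) ind (Q x) = size L.
Proof.
move=> hU hL hQ hLU; apply/eqP; rewrite eqn_leq; apply/andP; split.
  by apply: count_le => // x /hQ.
by apply: count_ge => // l lL; split; [apply/hQ | apply: hLU].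
Qed.

Lemma count_bij (U1 U2 : seq T) (P Q : T -> Prop) (f : T -> T) :
  NoDupT U1 -> NoDupT U2 -> (forall x, P x -> List.In x U1) -> (forall y, Q y -> List.In y U2) ->
  (forall x, P x -> Q (f x)) -> (forall y, Q y -> exists2 x, P x & f x = y) ->
  (forall x x', P x -> P x' -> f x = f x' -> x = x') ->
  \sum_(x <- U1) ind (P x) = \sum_(y <- U2) ind (Q y).
Proof.
move=> h1 h2 hP hQ hf hs hi.
transitivity (\sum_(x <- U1) \sum_(y <- U2) ind (P x /\ f x = y)).
  apply: eq_bigr => x _.
  rewrite (@sum_one (fun x y => x = y) U2 (fun y => P x /\ f x = y)) //; last by move=> ? ? [_ <-] [_ <-].
  apply: ind_iff; split; last by case=> ? _ [].
  by move=> px; exists (f x) => //; apply: hQ; apply: hf.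
rewrite exchange_big /=; apply: eq_bigr => y _.
rewrite (@sum_one (fun x y => x = y) U1 (fun x => P x /\ f x = y)) //; last first.
  by move=> x x' [p1 e1] [p2 e2]; apply: hi => //; rewrite e1 e2.
apply: ind_iff; split; first by case=> x _ [px <-]; apply: hf.
by move=> qy; case: (hs y qy) => x px fx; exists x => //; apply: hP.
Qed.

Fixpoint dedup (s : seq T) : seq T :=
  if s is x :: s' then (if pb (List.In x s') then dedup s' else x :: dedup s') else [::].

Lemma dedup_in s x : List.In x (dedup s) <-> List.In x s.
Proof.
elim: s => [|a s IH] //=; case: pbP => h /=.
  rewrite IH; split; [by right | by case=> [<-|]].
rewrite IH; tauto.
Qed.
Lemma dedup_nodup s : NoDupT (dedup s).
Proof.
elim: s => [|a s IH] //=; case: pbP => h //=; split => // y /dedup_in yin e.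
by apply: h; rewrite e.
Qed.

Lemma iota_in j s t : List.In j (iota s t) <-> s <= j < s + t.
Proof.
elim: t s => [|t IH] s /=; first by split => //; lia.
rewrite IH; split; [case; lia | move=> h; case: (eqVneq s j) => [->|ne]; [by left|right; lia]].
Qed.

Lemma map_iota_in (f : nat -> T) s t x :
  List.In x (map f (iota s t)) <-> exists2 j, s <= j < s + t & x = f j.
Proof.
rewrite List.in_map_iff; split.
  by case=> j [<- /iota_in h]; exists j.
by case=> j h ->; exists j; split => //; apply/iota_in.
Qed.

Lemma map_iota_nodup (f : nat -> T) s t :
  (forall j k, s <= j -> j < k -> k < s + t -> f j <> f k) -> NoDupT (map f (iota s t)).
Proof.
elim: t s => [|t IH] s h //=; split.
  move=> y /map_iota_in [j hj ->]; apply: h; lia.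
apply: IH => j k h1 h2 h3; apply: h; lia.
Qed.

End Count.

Definition Bd (T : tmap) (inF : T -> Prop) (x : T) := inF x /\ ~ inF (sigmai x).
Definition bnd (T : tmap) (inF : T -> Prop) (x : T) := ~ (inF x <-> inF (sigmai x)).
Definition arc (T : tmap) (red : T -> bool) (inF : T -> Prop) (z : T) (t : nat) :=
  [/\ 2 <= t, (forall j, j < t -> inF (iter j sigma z)), ~ inF (iter t sigma z),
      (forall j k, j < k < t -> iter j sigma z <> iter k sigma z) &
      ((forall x, same_vertex z x -> inF x -> (exists2 j, j < t & x = iter j sigma z)) /\
      (t = 2 -> ~~ red (sigma z)))].

Section Local.
Variables (T : tmap) (red : T -> bool) (inF : T -> Prop).
Hypothesis Hred : reducing red.
Hypothesis HinF : forall x, inF (phi x) <-> inF x.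
Implicit Types x y z g : T.

Lemma arc_t_uniq z t t' : arc red inF z t -> arc red inF z t' -> t = t'.
Proof.
case=> _ i1 o1 _ _ [_ i2 o2 _ _].
case: (ltngtP t t') => // c; [by case: o1; apply: i2 | by case: o2; apply: i1].
Qed.

Lemma sigmai_iterS j z : sigmai (iter j.+1 sigma z) = iter j sigma z.
Proof. by rewrite iterS sigmaK. Qed.

Lemma arc_Bd_uniq z t x : arc red inF z t -> Bd inF x -> same_vertex z x -> x = z.
Proof.
case=> _ hin _ _ [hc _] [ix nx] sx.
case: (hc x sx ix) => [[|j]] jt ex; first by rewrite ex.
by case: nx; rewrite ex sigmai_iterS; apply: hin; lia.
Qed.

Lemma Bd_phi_contra (ZL : forall x, Bd inF x -> exists t, arc red inF x t) x :
  Bd inF x -> Bd inF (phi x) -> False.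
Proof.
move=> [ix nx] bp; case: (ZL _ bp) => t [t2 hin _ _ _].
have := hin 1 t2; rewrite /= sigma_phi => h.
by apply: nx; apply/inF_alpha.
Qed.

Lemma phi2_asigma g : phi (phi g) = alpha (sigma g).
Proof. apply: phi_inj; by rewrite phi3 phi_asigma. Qed.

Lemma no_t4 (ZL : forall x, Bd inF x -> exists t, arc red inF x t)
  (FB : forall x, inF x -> exists2 x', same_face x x' & Bd inF x') z :
  Bd inF z -> arc red inF z 4 -> red (iter 3 sigma z) -> False.
Proof.
move=> bz [_ hin out _ _] r3.
set g := iter 2 sigma z.
have ig : inF g by apply: hin.
have i1 : inF (sigma z) by apply: (hin 1).
have i3 : inF (iter 3 sigma z) by apply: hin.
have iz : inF z by apply: (hin 0).
have bzu : Bd inF (phi g).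
  case: (FB g ig) => x' sx' bx'; case: (sf_cases sx') => ex; subst x'.
  - by case: bx' => _ []; rewrite /g sigmai_iterS.
  - done.
  - case: bx' => _ []; rewrite phi2_asigma -phi_alpha; apply/HinF.
    by rewrite alphaK /g -iterS.
set zu := phi g.
case: (ZL _ bzu) => tu [tu2 hinu _ _ [_ ht2]].
have szu : sigma zu = alpha g by rewrite /zu sigma_phi.
have h2 : phi (phi (sigma z)) = alpha g.
  apply: phi_inj; rewrite phi3 phi_alpha /g; by rewrite sigmai_iterS.
have bf : Bd inF (phi (sigma z)).
  case: (FB (sigma z) i1) => x' sx' bx'; case: (sf_cases sx') => ex; subst x'.
  - by case: bx' => _ []; rewrite sigmaK.
  - done.
  - case: bx' => _ []; rewrite h2.
    rewrite -phi_alpha alphaK; by apply/HinF.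
have e2 : sigma (alpha g) = alpha (phi (sigma z)).
  rewrite -[sigma (alpha g)]alphaK; congr alpha; apply: phi_inj.
  by rewrite phi_asigma h2.
have out2 : ~ inF (iter 2 sigma zu).
  rewrite /= szu e2; case: bf => _ nb; by move/(inF_alpha HinF)/nb.
have tu2' : tu = 2.
  case: (ltngtP tu 2) => // c; [lia | by case: out2; apply: hinu].
have := ht2 tu2'; rewrite szu.
have -> : red (alpha g) = red (sigma z).
  by rewrite -(red_phi Hred (alpha g)) phi_alpha /g sigmai_iterS.
have : red (iter 3 sigma z) = red (sigma z).
  by rewrite (red_iter_sigma Hred) (red_sigma Hred); case: (red z).
by rewrite r3 => <-.
Qed.

End Local.

Section Walk.
Variables (T : tmap) (red : T -> bool) (inF : T -> Prop).
Hypothesis Hred : reducing red.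
Hypothesis HinF : forall x, inF (phi x) <-> inF x.
Variables (n n' : nat) (w w' : nat -> T).
Hypotheses (Hc : closed_walk n w) (Hs : simple_walk n w) (Hc' : closed_walk n' w')
  (Hdis : forall i j, ~ same_vertex (w i) (w' j))
  (Hb : forall x, bnd inF x <-> on_walk n w x \/ on_walk n' w' x)
  (Hr : reduced_walk red n w).
Implicit Types x y z : T.

Lemma n0 : 0 < n. Proof. by case: Hc. Qed.
Lemma wper i : w (i + n) = w i. Proof. by case: Hc. Qed.
Lemma w_sv i : same_vertex (alpha (w i)) (w i.+1). Proof. by case: Hc. Qed.
Lemma w'_sv i : same_vertex (alpha (w' i)) (w' i.+1). Proof. by case: Hc'. Qed.

Lemma wmod i : w i = w (i %% n).
Proof.
rewrite {1}(divn_eq i n); elim: (i %/ n) => [|q IH]; first by rewrite mul0n add0n.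
by rewrite mulSn -addnA addnC wper.
Qed.

Lemma simple_mod p q : same_vertex (w p) (w q) -> p %% n = q %% n.
Proof.
rewrite (wmod p) (wmod q) => h.
have hp : p %% n < n by rewrite ltn_mod n0.
have hq : q %% n < n by rewrite ltn_mod n0.
have hs : forall i j, i < j < n -> ~ same_vertex (w i) (w j) := Hs.
case: (ltngtP (p %% n) (q %% n)) => // c.
  by case: (hs (p %% n) (q %% n)) => //; apply/andP.
by case: (hs (q %% n) (p %% n)) => //; [apply/andP | apply: sv_sym].
Qed.

Lemma onw_e i : on_walk n w (w i).
Proof. exists (i %% n); [by rewrite ltn_mod n0 | left; exact: wmod]. Qed.
Lemma onw_a i : on_walk n w (alpha (w i)).
Proof. exists (i %% n); [by rewrite ltn_mod n0 | right; by rewrite -wmod]. Qed.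

Lemma key1 i x : same_vertex (alpha (w i)) x -> bnd inF x -> x = alpha (w i) \/ x = w i.+1.
Proof.
move=> sx /Hb [[j _ [ex|ex]]|[j _ [ex|ex]]]; subst x.
- right; have h : same_vertex (w i.+1) (w j) by apply: sv_trans (sv_sym (w_sv i)) sx.
  by rewrite (wmod j) -(simple_mod h) -wmod.
- left; have h : same_vertex (w i.+1) (w j.+1).
    exact: sv_trans (sv_trans (sv_sym (w_sv i)) sx) (w_sv j).
  move: (simple_mod h); rewrite -(addn1 i) -(addn1 j) => /eqP; rewrite eqn_modDr => /eqP e.
  by rewrite (wmod j) -e -wmod.
- by case: (@Hdis i.+1 j); apply: sv_trans (sv_sym (w_sv i)) sx.
- case: (@Hdis i.+1 j.+1).
  exact: sv_trans (sv_trans (sv_sym (w_sv i)) sx) (w'_sv j).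
Qed.

Lemma noBad i : i < n -> ~ bad_turn red (w i) (w i.+1).
Proof. by case: Hr => _ h _ _; apply: h. Qed.

Lemma lturn_iff k (e e' : T) : lturn k e e' <->
  iter k sigma e' = alpha e /\ forall j, j < k -> iter j sigma e' <> alpha e.
Proof.
rewrite /lturn iter_si_eq; split=> [[h1 h2]|[h1 h2]]; split => // j jk.
  by move=> h; apply: (h2 j jk); apply/iter_si_eq.
by move/iter_si_eq; apply: h2.
Qed.

Lemma WV i : i < n -> exists z t, [/\ Bd inF z, arc red inF z t, same_vertex (alpha (w i)) z,
  (inF (alpha (w i.+1)) <-> inF (alpha (w i))) &
  ((z = alpha (w i) /\ inF (alpha (w i)) /\ rturn t (w i) (w i.+1)) \/
   (z = w i.+1 /\ ~ inF (alpha (w i)) /\ lturn t (w i) (w i.+1)))].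
Proof.
move=> lti.
have nb := noBad lti.
move: nb (key1 (i := i)) (w_sv i) (onw_a i) (onw_e i.+1).
set e := w i; set e' := w i.+1; set a := alpha e => nb k1 sae oa oe.
have ane : a <> e'.
  by move=> h; apply: nb; left; split.
have bnda : bnd inF a by apply/Hb; left.
have bnde : bnd inF e' by apply/Hb; left.
case: (exists_min sae) => m [hm mmin].
have m0 : 0 < m.
  by case: m hm mmin => // h _; case: ane.
have sea : same_vertex e' a := sv_sym sae.
case: (exists_min sea) => m2 [hm2 m2min].
have m20 : 0 < m2.
  by case: m2 hm2 m2min => // h _; case: ane.
have perA : forall j, 0 < j < m -> iter j sigma a <> a.
  move=> j hj h; apply: (mmin (m - j)); first by lia.
  by rewrite -{1}h -iterD subnK ?hm //; lia.
have perB : forall j, 0 < j < m2 -> iter j sigma e' <> e'.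
  move=> j hj h; apply: (m2min (m2 - j)); first by lia.
  by rewrite -{1}h -iterD subnK ?hm2 //; lia.
have nbA : forall j, 0 < j < m -> ~ bnd inF (iter j sigma a).
  move=> j hj hb; case: (k1 _ (sv_iter j a) hb) => h.
  - by apply: (perA j hj).
  - by apply: (mmin j) => //; lia.
have nbB : forall j, 0 < j < m2 -> ~ bnd inF (iter j sigma e').
  move=> j hj hb.
  have sj : same_vertex a (iter j sigma e') := sv_trans sae (sv_iter j e').
  case: (k1 _ sj hb) => h.
  - by apply: (m2min j) => //; lia.
  - by apply: (perB j hj).
have inA : forall j, j < m -> (inF (iter j sigma a) <-> inF a).
  elim=> // j IH hj.
  have nb' := nbA j.+1 (ltac:(lia)).
  rewrite -IH; last by lia.
  apply: NNPP => h; apply: nb'; by rewrite /bnd sigmai_iterS.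
have inB : forall j, j < m2 -> (inF (iter j sigma e') <-> inF e').
  elim=> // j IH hj.
  have nb' := nbB j.+1 (ltac:(lia)).
  rewrite -IH; last by lia.
  apply: NNPP => h; apply: nb'; by rewrite /bnd sigmai_iterS.
have em : sigmai e' = iter m.-1 sigma a.
  by rewrite -hm -{1}(prednK m0) sigmai_iterS.
have em2 : sigmai a = iter m2.-1 sigma e'.
  by rewrite -hm2 -{1}(prednK m20) sigmai_iterS.
have ie' : inF e' <-> ~ inF a.
  have := inA m.-1 (ltac:(lia)); rewrite -em => h.
  move: bnde; rewrite /bnd h; tauto.
have distA : forall j k, j < k < m -> iter j sigma a <> iter k sigma a.
  move=> j k hjk h; apply: (perA (k - j)); first by lia.
  apply: (@iter_s_inj _ j); rewrite -iterD subnKC ?h //; lia.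
have distB : forall j k, j < k < m2 -> iter j sigma e' <> iter k sigma e'.
  move=> j k hjk h; apply: (perB (k - j)); first by lia.
  apply: (@iter_s_inj _ j); rewrite -iterD subnKC ?h //; lia.
have cover : forall x, same_vertex a x ->
    (exists2 j, j < m & x = iter j sigma a) \/ (exists2 j, j < m2 & x = iter j sigma e').
  move=> x sx; case: (exists_min sx) => k [hk kmin].
  case: (ltnP k m) => km; first by left; exists k.
  case: (ltnP (k - m) m2) => km2.
    by right; exists (k - m) => //; rewrite -hk -hm -iterD subnK.
  exfalso; apply: (kmin (k - m - m2)); first by lia.
  rewrite -hk -{1}hm2 -hm -!iterD; congr (iter _ _ _); lia.
have ea : inF (alpha e') <-> inF a.
  rewrite (inF_alpha HinF) em; apply: inA; lia.
case: (classic (inF a)) => ia.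
- exists a, m; split.
  + by split => // h; apply: bnda; split.
  + split => //.
    * case: (leqP 2 m) => // c.
      have m1 : m = 1 by lia.
      exfalso; apply: nb; right; right; left; split => //; split; first by rewrite -hm m1.
      by move=> [|j] // _; exact: ane.
    * by move=> j jm; apply/inA.
    * by rewrite hm ie'.
    * split.
        move=> x sx ix; case: (cover x (sv_trans (sv_refl a) sx)) => // [[j jm ex]].
        by exfalso; move: ix; rewrite ex inB // ie'.
      move=> m2' ; have rt : rturn 2 e e' by rewrite /rturn -m2'.
      have nr : ~~ red e by apply/negP => re; apply: nb; do 4 right; split.
      by rewrite (red_sigma Hred) /a (red_alpha Hred) negbK.
  + exact: sv_refl.
  + exact: ea.
  + by left; split => //; split => //; split.
- exists e', m2; split.
  + split; first by apply/ie'.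
    by rewrite em inA //; lia.
  + split => //.
    * case: (leqP 2 m2) => // c.
      have m1 : m2 = 1 by lia.
      exfalso; apply: nb; right; left; apply/lturn_iff; split; first by move: hm2; rewrite m1.
      by move=> [|j] // _ h; apply: ane.
    * by move=> j jm; rewrite inB //; apply/ie'.
    * by rewrite hm2.
    * split.
        move=> x sx ix; case: (cover x (sv_trans sae sx)) => // [[j jm ex]].
        by exfalso; move: ix; rewrite ex inA.
      move=> m2'.
      have lt : lturn 2 e e'.
        by apply/lturn_iff; rewrite -m2'; split.
      have nr : ~~ red e by apply/negP => re; apply: nb; do 3 right; left; split.
      have ra : red a = red e'.
        by rewrite -hm2 m2' (red_iter_sigma Hred).
      move: nr; rewrite (red_sigma Hred) -ra /a (red_alpha Hred).
      by case: (red e).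
  + exact: sae.
  + exact: ea.
  + by right; split => //; split => //; apply/lturn_iff; split.
Qed.

Lemma vert_of x : on_walk n w x -> exists2 i, i < n & (x = alpha (w i) \/ x = w i.+1).
Proof.
case=> j jn [->|->]; last by exists j => //; left.
case: j jn => [|j] jn.
  exists n.-1; first by rewrite prednK ?n0.
  by right; rewrite prednK ?n0 // -(wper 0).
by exists j => //; [lia | right].
Qed.

Lemma WZ x : on_walk n w x -> exists z t, [/\ Bd inF z, arc red inF z t & same_vertex x z].
Proof.
case/vert_of => i lti hx; case: (WV lti) => z [t [bz az sz _ _]].
exists z, t; split => //.
case: hx => ->; first exact: sz.
exact: sv_trans (sv_sym (w_sv i)) sz.
Qed.

Lemma FW (H3 : forall z t, Bd inF z -> arc red inF z t -> t = 3) x :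
  on_walk n w x -> Bd inF x -> ~~ red x.
Proof.
have step : forall i, i < n ->
  [/\ (inF (alpha (w i.+1)) <-> inF (alpha (w i))), red (w i.+1) = red (w i) &
      ((inF (alpha (w i)) /\ rturn 3 (w i) (w i.+1)) \/
       (~ inF (alpha (w i)) /\ lturn 3 (w i) (w i.+1)))].
  move=> i lti; case: (WV lti) => z [t [bz az sz o hc]].
  have t3 := H3 _ _ bz az; subst t.
  split => //.
  - case: hc => [[_ [_ [_ [h _]]]] | [_ [_ /lturn_iff [h _]]]].
    + by rewrite -h (red_iter_sigma Hred) (red_alpha Hred) /= negbK.
    + move: h => /(congr1 red); rewrite (red_iter_sigma Hred) (red_alpha Hred) /=.
      by case: (red (w i)); case: (red (w i.+1)).
  - by case: hc => [[_ [h1 h2]] | [_ [h1 h2]]]; [left | right].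
have inv : forall i, i < n -> (inF (alpha (w i)) <-> inF (alpha (w 0))) /\ red (w i) = red (w 0).
  elim=> // i IH hi.
  case: (step i (ltnW hi)) => o c _; case: (IH (ltnW hi)) => o' c'.
  split; [by rewrite o o' | by rewrite c c'].
move=> ox bx; case: (vert_of ox) => i lti hx.
case: (WV lti) => z [t [bz az sz _ hc]].
have xz : x = z.
  apply: (arc_Bd_uniq az bx); apply: sv_trans (sv_sym sz) _.
  case: hx => ->; [exact: sv_refl | exact: w_sv].
subst x.
case: (inv i lti) => oi ci.
case: (classic (inF (alpha (w 0)))) => O.
- have r0 : red (w 0).
    case: (boolP (red (w 0))) => // h0; exfalso.
    case: Hr => _ _ _; apply => j jn.
    case: (step j jn) => _ _ [[_ r]|[nr _]]; last by case: nr; apply/(proj1 (inv j jn)).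
    by split => //; rewrite (proj2 (inv j jn)).
  case: hc => [[-> _] | [_ [h _]]]; last by case: h; apply/oi.
  by rewrite (red_alpha Hred) ci r0.
- have r0 : ~~ red (w 0).
    apply/negP => h0.
    case: Hr => _ _ hn _; apply: hn => j jn.
    case: (step j jn) => _ _ [[r _]|[_ l]]; first by case: O; apply/(proj1 (inv j jn)).
    by split => //; rewrite (proj2 (inv j jn)).
  case: hc => [[_ [h _]] | [-> _]]; first by case: O; apply/oi.
  by case: (step i lti) => _ -> _; rewrite ci.
Qed.

End Walk.

Section Global.
Variables (T : tmap) (red : T -> bool) (inF : T -> Prop).
Hypothesis Hred : reducing red.
Hypothesis HinF : forall x, inF (phi x) <-> inF x.
Hypothesis ZL : forall x, Bd inF x -> exists t, arc red inF x t.
Hypothesis ZI : forall x, bnd inF x -> exists2 z, Bd inF z & same_vertex x z.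
Variable U : seq T.
Hypothesis HU : Rdistinct (fun x y : T => x = y) U.
Hypothesis HUin : forall x, inF x -> List.In x U.
Hypothesis HUa : forall x, inF (alpha x) -> List.In x U.
Implicit Types x y z : T.

Definition Ab x := inF x /\ ~ inF (sigma x) /\ ~~ red x.
Definition Zb x := Bd inF x /\ ~~ red x.
Definition t_ y := \sum_(x <- U) ind (inF x /\ same_vertex y x).
Definition b_ y := \sum_(x <- U) ind (Bd inF x /\ same_vertex y x).
Definition a_ y := \sum_(x <- U) ind (Ab x /\ same_vertex y x).
Definition z_ y := \sum_(x <- U) ind (Zb x /\ same_vertex y x).

Lemma count_one (Q : T -> Prop) c (P : Prop) :
  (forall x, Q x <-> x = c /\ P) -> (P -> List.In c U) ->
  \sum_(x <- U) ind (Q x) = ind P.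
Proof.
move=> hQ hc; case: (classic P) => p.
  rewrite (ind_T p) (@count_list _ U [:: c]) //.
  - by move=> x; rewrite hQ /=; split; [case=> -> _; left | case=> // <-].
  - by move=> l [<-|] //; apply: hc.
rewrite (ind_F p) (@count_list _ U [::]) //.
by move=> x; rewrite hQ /=; split => // [[_]].
Qed.

Lemma FBu x1 x2 : Bd inF x1 -> Bd inF x2 -> same_face x1 x2 -> x1 = x2.
Proof.
move=> b1 b2 /sf_cases [->|e|e] //.
  by case: (Bd_phi_contra HinF ZL b1); rewrite -e.
case: (Bd_phi_contra HinF ZL b2); rewrite e phi3 //.
Qed.

Lemma rep_bd y z t : same_vertex y z -> Bd inF z -> arc red inF z t ->
  [/\ t_ y = t, b_ y = 1, a_ y = ind (~~ red (iter t.-1 sigma z)) & z_ y = ind (~~ red z)].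
Proof.
move=> yz bz az; case: (az) => t2 hin out dist [cov t2r].
have tt : t = t.-1.+1 by lia.
split.
- rewrite /t_ (@count_list _ U (map (fun j => iter j sigma z) (iota 0 t))) //.
  + by rewrite size_map size_iota.
  + by apply: map_iota_nodup => j k _ jk kt; apply: dist; lia.
  + move=> x; rewrite map_iota_in; split.
      case=> ix yx; case: (cov x (sv_trans (sv_sym yz) yx) ix) => j jt ->.
      by exists j.
    case=> j jt ->; split; first by apply: hin; lia.
    exact: sv_trans yz (sv_iter j z).
  + move=> l /map_iota_in [j jt ->]; apply: HUin; apply: hin; lia.
- rewrite /b_ (@count_one _ z True) ?ind_T //; last by move=> _; apply: HUin; case: bz.
  move=> x; split; last by case=> -> _.
  case=> bx yx; split => //; exact: (arc_Bd_uniq az bx (sv_trans (sv_sym yz) yx)).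
- rewrite /a_ (@count_one _ (iter t.-1 sigma z) (~~ red (iter t.-1 sigma z))) //; last first.
    by move=> _; apply: HUin; apply: hin; lia.
  move=> x; split.
    case=> [[ix [nx rx]] yx]; case: (cov x (sv_trans (sv_sym yz) yx) ix) => j jt ex.
    have jt1 : j = t.-1.
      case: (ltngtP j t.-1) => // c; [|lia].
      by case: nx; rewrite ex -iterS; apply: hin; lia.
    by subst j; split => //; rewrite -ex.
  case=> -> rx; split; last exact: sv_trans yz (sv_iter _ z).
  split; first by apply: hin; lia.
  by split => //; rewrite -iterS -tt.
- rewrite /z_ (@count_one _ z (~~ red z)) //; last by move=> _; apply: HUin; case: bz.
  move=> x; split; last by case=> -> rz; split => //; exact: sv_refl.
  case=> [[bx rx] yx]; have := arc_Bd_uniq az bx (sv_trans (sv_sym yz) yx).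
  by move=> ex; subst x.
Qed.

Lemma rep_int y : inF y -> (forall x, Bd inF x -> ~ same_vertex y x) ->
  [/\ 8 <= t_ y, b_ y = 0 & z_ y = 0].
Proof.
move=> iy nb.
have all : forall j, inF (iter j sigma y).
  elim=> // j IH; apply: NNPP => h.
  have bj : bnd inF (iter j.+1 sigma y).
    by rewrite /bnd sigmai_iterS; tauto.
  case: (ZI bj) => z bz sz; apply: (nb z bz).
  exact: sv_trans (sv_iter _ y) sz.
split.
- have := @count_ge _ U (map (fun j => iter j sigma y) (iota 0 8)) (fun x => inF x /\ same_vertex y x) HU.
  rewrite size_map size_iota; apply.
    by apply: map_iota_nodup => j k _ jk k8; apply: (deg8 Hred); lia.
  move=> l /map_iota_in [j _ ->]; split; last by apply: HUin.
  by split => //; exact: sv_iter.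
- apply/eqP; rewrite -leqn0.
  by apply: (@count_le _ U [::]) => // x [bx yx]; case: (nb x bx).
- apply/eqP; rewrite -leqn0.
  by apply: (@count_le _ U [::]) => // x [[bx _] yx]; case: (nb x bx).
Qed.

Lemma sv_euclid y y' x : same_vertex y x -> same_vertex y' x -> same_vertex y y'.
Proof. by move=> h1 h2; apply: sv_trans h1 (sv_sym h2). Qed.
Lemma sf_euclid y y' x : same_face y x -> same_face y' x -> same_face y y'.
Proof. by move=> h1 h2; apply: sf_trans h1 (sf_sym h2). Qed.
Lemma se_euclid y y' x : same_edge y x -> same_edge y' x -> same_edge y y'.
Proof.
rewrite /same_edge => [[->|->]] [e|e].
- by left.
- by right; rewrite e alphaK.
- by right.
- by left; apply: (can_inj (@alphaK T)).
Qed.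

Lemma red_cases z t : arc red inF z t -> t <= 3 ->
  (t = 2 /\ ~~ red (sigma z) /\ red z) \/ (t = 3 /\ red (iter 2 sigma z) = red z).
Proof.
case=> t2 _ _ _ [_ h2] t3.
case: (ltngtP t 3) => c; [|lia|].
- have e : t = 2 by lia.
  left; split => //; split; first by apply: h2.
  by move: (h2 e); rewrite (red_sigma Hred) negbK.
- by right; split => //; rewrite (red_iter_sigma Hred).
Qed.

Theorem tight (V E F : nat) :
  nclasses inF (@same_vertex T) V ->
  nclasses (fun x => inF x \/ inF (alpha x)) (@same_edge T) E ->
  nclasses inF (@same_face T) F -> V + F = E ->
  (forall z t, Bd inF z -> arc red inF z t -> t = 3) /\
  (forall x, inF x -> exists2 x', same_face x x' & Bd inF x').
Proof.
move=> [lV [sV pV cV dV]] [lE [sE pE cE dE]] [lF [sF pF cF dF]] eul.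
set Dc := \sum_(x <- U) ind (inF x).
set Bc := \sum_(x <- U) ind (Bd inF x).
set Ac := \sum_(x <- U) ind (Ab x).
set Zc := \sum_(x <- U) ind (Zb x).
set P' := fun x => inF x \/ inF (alpha x).
set D' := fun x => ~ inF x /\ inF (alpha x).
have n1 : forall y, phi y <> y := fun y => @face_nofix T y.
have n2 : forall y, phi (phi y) <> y.
  move=> y h; have := congr1 (@phi T) h; rewrite phi3 => e; apply: (n1 y); by rewrite -e.
have hF : Dc = 3 * F.
  rewrite /Dc (@class_sum _ U lF inF inF (@same_face T)) //; last exact: sf_euclid.
  rewrite -sF -sum_const; apply: sum_in_eq => y yl.
  have iy := pF y yl.
  rewrite (@count_list _ U [:: y; phi y; phi (phi y)]) //.
  - rewrite /=; split; first by move=> x [e|[e|//]] h; [apply: (n1 y) | apply: (n2 y)]; rewrite e h.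
    split; last by split => // ? [].
    by move=> x [e|//] h; apply: (n1 (phi y)); rewrite e h.
  - move=> x; split.
      by case=> _ /sf_cases [->|->|->]; [left | right; left | right; right; left].
    move=> [<-|[<-|[<-|//]]]; split.
    + exact: iy.
    + by exists 0.
    + by apply/(inF_sf HinF (sf_phi y)).
    + exact: sf_phi.
    + by apply/(inF_sf HinF (sf_phi2 y)).
    + exact: sf_phi2.
  - move=> l [<-|[<-|[<-|//]]]; apply: HUin => //.
    + by apply/(inF_sf HinF (sf_phi y)).
    + by apply/(inF_sf HinF (sf_phi2 y)).
have hE : \sum_(x <- U) ind (P' x) = 2 * E.
  rewrite (@class_sum _ U lE P' P' (@same_edge T)) //; last exact: se_euclid.
  rewrite -sE -sum_const; apply: sum_in_eq => y yl.
  have py := pE y yl.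
  rewrite (@count_list _ U [:: y; alpha y]) //.
  - rewrite /=; split; last by split => // ? [].
    move=> x [e|//] h; apply: (@alpha_nofix T y); by rewrite e h.
  - move=> x; split; first by case=> _ [->|->]; [left | right; left].
    move=> [<-|[<-|//]]; split => //; try by [left | right].
    by case: py => h; [right; rewrite alphaK | left].
  - move=> l [<-|[<-|//]].
      by case: py => h; [apply: HUin | apply: HUa].
    by case: py => h; [apply: HUa; rewrite alphaK | apply: HUin].
have hP' : \sum_(x <- U) ind (P' x) = Dc + \sum_(x <- U) ind (D' x).
  rewrite /Dc -big_split; apply: eq_bigr => x _ /=.
  case: (classic (inF x)) => ix.
    rewrite (@ind_T (P' x)); last by left.
    by rewrite (ind_T ix) (@ind_F (D' x)) // => [[]].
  by rewrite (ind_F ix) add0n; apply: ind_iff; rewrite /P' /D'; tauto.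
have hD' : \sum_(x <- U) ind (D' x) = Bc.
  apply: (@count_bij _ U U D' (Bd inF) alpha) => //.
  - by move=> x [_ h]; apply: HUa.
  - by move=> y [h _]; apply: HUin.
  - move=> x [nx iax]; split => // h; apply: nx; apply/HinF; exact: h.
  - move=> y [iy ny]; exists (alpha y); last by rewrite alphaK.
    split; last by rewrite alphaK.
    by move/(inF_alpha HinF).
  - by move=> x x' _ _; apply: (can_inj (@alphaK T)).
have hDv : Dc = \sum_(y <- lV) t_ y.
  by rewrite /Dc (@class_sum _ U lV inF inF (@same_vertex T)) //; exact: sv_euclid.
have hBv : Bc = \sum_(y <- lV) b_ y.
  rewrite /Bc (@class_sum _ U lV inF (Bd inF) (@same_vertex T)) //; first exact: sv_euclid.
  by move=> x [].
have hAv : Ac = \sum_(y <- lV) a_ y.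
  rewrite /Ac (@class_sum _ U lV inF Ab (@same_vertex T)) //; first exact: sv_euclid.
  by move=> x [].
have hZv : Zc = \sum_(y <- lV) z_ y.
  rewrite /Zc (@class_sum _ U lV inF Zb (@same_vertex T)) //; first exact: sv_euclid.
  by move=> x [[]].
have hAZ : Ac = Zc.
  apply: (@count_bij _ U U Ab Zb (fun x => alpha (sigma x))) => //.
  - by move=> x [h _]; apply: HUin.
  - by move=> y [[h _] _]; apply: HUin.
  - move=> x [ix [nsx rx]]; split; last by rewrite (red_alpha Hred) (red_sigma Hred) negbK.
    split; first by apply/HinF; rewrite phi_asigma.
    move=> h; apply: nsx; apply/HinF; exact: h.
  - move=> y [[iy ny] ry]; exists (sigmai (alpha y)); last by rewrite sigmaiK alphaK.
    split; first exact: (proj2 (HinF y) iy).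
    split; first by rewrite sigmaiK; move/(inF_alpha HinF).
    by rewrite (red_sigmai Hred) (red_alpha Hred) negbK.
  - move=> x x' _ _ e; apply: (can_inj (@sigmaK T)); exact: (can_inj (@alphaK T)).
have hV : Dc + 3 * Bc = 6 * V by lia.
have hge : forall y, List.In y lV -> 6 + z_ y <= t_ y + 3 * b_ y + a_ y.
  move=> y yl; case: (classic (exists2 x, Bd inF x & same_vertex y x)).
    case=> x bx yx; case: (ZL bx) => t az.
    case: (rep_bd yx bx az) => -> -> -> ->.
    case: (leqP t 3) => t3; last by have := ind_le1 (~~ red x); lia.
    case: (red_cases az t3) => [[-> [h1 h2]] | [-> h]].
      by rewrite /= (ind_T h1) (@ind_F (~~ red x)) ?h2.
    by rewrite /= h; lia.
  move=> nb; case: (rep_int (pV y yl)) => [|t8 -> ->]; last by lia.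
  by move=> x bx yx; apply: nb; exists x.
have sumL : \sum_(y <- lV) (t_ y + 3 * b_ y + a_ y) = Dc + 3 * Bc + Ac.
  rewrite !big_split /= -hDv -hBv -hAv sum_const mul0n; lia.
have sumR : \sum_(y <- lV) (6 + z_ y) = 6 * V + Zc.
  by rewrite big_split /= sum_const sV -hZv.
have heq := @sum_eq_ge _ lV _ _ hge (ltac:(lia)).
have hbd : forall y, List.In y lV -> exists2 x, Bd inF x & same_vertex y x.
  move=> y yl; apply: NNPP => nb.
  case: (rep_int (pV y yl)) => [|t8 b0 z0]; first by move=> x bx yx; apply: nb; exists x.
  by have := heq y yl; rewrite b0 z0; lia.
have heq2 : forall y, List.In y lV -> t_ y + a_ y = 3 + z_ y /\ b_ y = 1.
  move=> y yl; case: (hbd y yl) => x bx yx; case: (ZL bx) => t az.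
  have := heq y yl; case: (rep_bd yx bx az) => _ hb _ _; rewrite hb; split => //; lia.
have hBV : Bc = V.
  by rewrite hBv -sV -sum1_size; apply: sum_in_eq => y yl; case: (heq2 y yl).
have hTA : \sum_(y <- lV) (t_ y + a_ y) = \sum_(y <- lV) (3 + z_ y).
  by apply: sum_in_eq => y yl; case: (heq2 y yl).
move: hTA; rewrite !big_split /= sum_const sV -hDv -hAv -hZv => hTA.
have hFB : Bc = F by lia.
have hBF : Bc = \sum_(y <- lF) \sum_(x <- U) ind (Bd inF x /\ same_face y x).
  rewrite /Bc (@class_sum _ U lF inF (Bd inF) (@same_face T)) //; first exact: sf_euclid.
  by move=> x [].
have bf1 : forall y, \sum_(x <- U) ind (Bd inF x /\ same_face y x) <= 1.
  move=> y; case: (classic (exists2 x0, Bd inF x0 & same_face y x0)).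
    case=> x0 b0 s0; apply: (@count_le _ U [:: x0]) => // x [bx sx].
    left; apply: (FBu b0 bx); exact: sf_trans (sf_sym s0) sx.
  move=> nb; apply: (@leq_trans 0) => //; apply: (@count_le _ U [::]) => // x [bx sx].
  by apply: nb; exists x.
have bfe := @sum_eq_ge _ lF (fun _ => 1) _ (fun y _ => bf1 y).
have FB : forall x, inF x -> exists2 x', same_face x x' & Bd inF x'.
  move=> x ix; case: (cF x ix) => y yl yx.
  have := bfe (ltac:(rewrite sum1_size sF -hBF hFB //)) y yl.
  case: (classic (exists2 x', Bd inF x' & same_face y x')).
    by case=> x' b' s'; exists x' => //; exact: sf_trans (sf_sym yx) s'.
  move=> nb h1.
  have h0 : \sum_(x0 <- U) ind (Bd inF x0 /\ same_face y x0) <= 0.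
    by apply: (@count_le _ U [::]) => // x0 [bx sx]; case: nb; exists x0.
  exfalso; lia.
have ht : forall z t, Bd inF z -> arc red inF z t ->
    t + ind (~~ red (iter t.-1 sigma z)) = 3 + ind (~~ red z).
  move=> z t bz az; case: (cV z (proj1 bz)) => y yl yz.
  case: (rep_bd yz bz az) => <- _ <- <-; by case: (heq2 y yl).
have t23 : forall z t, Bd inF z -> arc red inF z t -> t <= 3.
  move=> z t bz az; have := ht z t bz az.
  have := ind_le1 (~~ red (iter t.-1 sigma z)); have := ind_le1 (~~ red z).
  case: (ltngtP t 4) => c; [lia| lia |] => _ _; subst t.
  case: (boolP (red (iter 3 sigma z))) => r3.
    by case: (no_t4 Hred HinF ZL FB bz az r3).
  by rewrite (@ind_T (~~ false)) //; have := ind_le1 (~~ red z); lia.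
have age : forall y, List.In y lV -> z_ y <= a_ y.
  move=> y yl; case: (hbd y yl) => x bx yx; case: (ZL bx) => t az.
  case: (rep_bd yx bx az) => _ _ -> ->.
  case: (red_cases az (t23 _ _ bx az)) => [[-> [h1 h2]] | [-> h]].
    by rewrite /= (ind_T h1); apply: ind_le1.
  by rewrite /= h.
have aze := @sum_eq_ge _ lV _ _ age (ltac:(rewrite -hAv -hZv hAZ //)).
split => // z t bz az.
case: (red_cases az (t23 _ _ bz az)) => [[te [h1 h2]] | [-> _]] //.
subst t; case: (cV z (proj1 bz)) => y yl yz.
have := aze y yl; case: (rep_bd yz bz az) => _ _ -> ->.
by rewrite /= (ind_T h1) (@ind_F (~~ red z)) ?h2.
Qed.

End Global.

Lemma Bd_bnd (T : tmap) (inF : T -> Prop) x : Bd inF x -> bnd inF x.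
Proof. by case=> ix nx h; apply: nx; apply/h. Qed.

Theorem lemma3p6 (T : tmap) (red : T -> bool) (n n' : nat) (w w' : nat -> T) :
  reducing red ->
  closed_walk n w -> simple_walk n w ->
  closed_walk n' w' -> simple_walk n' w' ->
  disjoint_walks n w n' w' ->
  bound_annulus n w n' w' ->
  ~ (reduced_walk red n w /\ reduced_walk red n' w').
Proof.
move=> Hred Hc Hs Hc' Hs' Hd [inF [HinF [l Hl] Hann _ [V [E [F [nV nE nF eul]]]]]] [Hr Hr'].
have Hb : forall x, bnd inF x <-> on_walk n w x \/ on_walk n' w' x.
  move=> x; rewrite -Hann /bnd -(inF_alpha HinF).
  case: (classic (inF x)); case: (classic (inF (alpha x))); tauto.
have Hb' : forall x, bnd inF x <-> on_walk n' w' x \/ on_walk n w x.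
  by move=> x; rewrite Hb; tauto.
have Hdis : forall i j, ~ same_vertex (w i) (w' j) := Hd.
have Hdis' : forall i j, ~ same_vertex (w' i) (w j).
  by move=> i j h; apply: (Hdis j i); apply: sv_sym.
have WZall : forall x, bnd inF x ->
    exists z t, [/\ Bd inF z, arc red inF z t & same_vertex x z].
  move=> x /Hb [o|o].
    exact: (WZ Hred HinF Hc Hs Hc' Hdis Hb Hr o).
  exact: (WZ Hred HinF Hc' Hs' Hc Hdis' Hb' Hr' o).
have ZL : forall x, Bd inF x -> exists t, arc red inF x t.
  move=> x bx; case: (WZall x (Bd_bnd bx)) => z [t [bz az sz]].
  exists t; have := arc_Bd_uniq az bx (sv_sym sz); by move=> e; subst.
have ZI : forall x, bnd inF x -> exists2 z, Bd inF z & same_vertex x z.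
  by move=> x bx; case: (WZall x bx) => z [t [bz az sz]]; exists z.
set U := dedup (l ++ map alpha l).
have HU : Rdistinct (fun x y : T => x = y) U := dedup_nodup _.
have HUin : forall x, inF x -> List.In x U.
  by move=> x ix; apply/dedup_in; apply: List.in_or_app; left; apply: Hl.
have HUa : forall x, inF (alpha x) -> List.In x U.
  move=> x ix; apply/dedup_in; apply: List.in_or_app; right.
  rewrite -(alphaK x); apply: List.in_map; exact: Hl.
case: (tight Hred HinF ZL ZI HU HUin HUa nV nE nF eul) => H3 FB.
have blue : forall x, Bd inF x -> ~~ red x.
  move=> x bx; case/Hb: (Bd_bnd bx) => o.
    exact: (FW Hred HinF Hc Hs Hc' Hdis Hb Hr H3 o bx).
  exact: (FW Hred HinF Hc' Hs' Hc Hdis' Hb' Hr' H3 o bx).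
case: (WV Hred HinF Hc Hs Hc' Hdis Hb Hr (n0 Hc)) => z [t [bz az _ _ _]].
have t3 := H3 _ _ bz az; subst t.
case: az => _ hin _ _ _.
have i1 : inF (sigma z) by apply: (hin 1).
case: (FB _ i1) => x' sx' bx'.
have := blue x' bx'; rewrite (red_sf Hred sx') (red_sigma Hred).
by rewrite (negbTE (blue z bz)).
Qed.
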